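(* Let $T\in(0,\infty)$, $n\in\mathbb N$, $s\in[0,T)$, $t\in[0,s]$, and let $\psi\colon[0,T]\to[0,\infty]$ be non-increasing. Then $$\sum_{r\in[s,T]}q^{n,[s,T]}(r)\,\psi(r)\le\sum_{r\in[t,T]}q^{n,[t,T]}(r)\,\psi(r).$$
   Context: For $n\in\mathbb N$ let $c^n_1,\dots,c^n_n\in[-1,1]$ be the $n$ distinct roots of the Legendre polynomial $x\mapsto\frac{1}{2^nn!}\frac{d^n}{dx^n}[(x^2-1)^n]$. For $a\in\mathbb R$, $b\in[a,\infty)$ let $q^{n,[a,b]}\colon[a,b]\to\mathbb R$ be $q^{n,[a,b]}(t)=\int_a^b\prod_{i\in\{1,\dots,n\},\,c^n_i\neq\frac{2t-(a+b)}{b-a}}\frac{2x-(b-a)c^n_i-(a+b)}{2t-(b-a)c^n_i-(a+b)}\,dx$ if $a<b$ and $\frac{2t-(a+b)}{b-a}\in\{c^n_1,\dots,c^n_n\}$, and $q^{n,[a,b]}(t)=0$ otherwise (Gauss–Legendre weights with $n$ nodes on $[a,b]$). Sums $\sum_{r\in[a,b]}$ range over the finitely many $r$ with nonzero weight; convention $0\cdot\infty=0$. *)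

(* Defs.v *)
From HB Require Import structures.
From mathcomp Require Import all_boot all_order all_algebra.
From mathcomp Require Import all_classical all_reals all_analysis.
Set Implicit Arguments. Unset Strict Implicit. Unset Printing Implicit Defensive.
Import Order.TTheory GRing.Theory Num.Theory.
Import numFieldNormedType.Exports.
Local Open Scope classical_set_scope.
Local Open Scope ring_scope.

Definition legendre (R : realType) (n : nat) : {poly R} :=
  ((2 ^+ n * (n`!)%:R)^-1) *: (('X ^+ 2 - 1) ^+ n)^`(n).

Definition legendre_roots (R : realType) (n : nat) : seq R :=
  finmap.enum_fset (fset_set [set c : R | root (legendre R n) c]).

Definition gl_weight (R : realType) (n : nat) (a b t : R) : R :=
  let x := (2 * t - (a + b)) / (b - a) in
  if (a < b) && (x \in legendre_roots R n) then
    (\int[lebesgue_measure]_(y in `[a, b])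
       \prod_(c <- legendre_roots R n | c != x)
          ((2 * y - (b - a) * c - (a + b)) / (2 * t - (b - a) * c - (a + b))))
  else 0.

(* \sum_{r in [a,b]} q^{n,[a,b]}(r) psi(r), over the finitely many r with
   nonzero weight, in extended reals (mathcomp: 0 * +oo = 0) *)
Definition gl_sum (R : realType) (n : nat) (a b : R) (psi : R -> \bar R) : \bar R :=
  \big[adde/0%E]_(r <- finmap.enum_fset (fset_set [set r : R | r \in `[a, b]%classic /\ gl_weight n a b r != 0]))
      ((gl_weight n a b r)%:E * psi r)%E.

(* Main.v *)
Require Import Defs.
From HB Require Import structures.
From mathcomp Require Import all_boot all_order all_algebra.
From mathcomp Require Import all_classical all_reals all_analysis.
From mathcomp Require Import ring lra zify.
Import Order.TTheory GRing.Theory Num.Theory.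
Import numFieldNormedType.Exports.
Local Open Scope classical_set_scope.
Local Open Scope ring_scope.
Set Implicit Arguments. Unset Strict Implicit. Unset Printing Implicit Defensive.
Section Poly.
Variable R : realType.
Implicit Types p q F G : {poly R}.

Definition Pint p : {poly R} :=
  \poly_(i < (size p).+1) (if i is j.+1 then p`_j / j.+1%:R else 0).

Lemma PintK p : (Pint p)^`() = p.
Proof.
apply/polyP => i; rewrite coef_deriv coef_poly.
case: ltnP => h.
  by rewrite /= -(mulr_natr (p`_i / _)) divfK // pnatr_eq0.
by rewrite mul0rn nth_default.
Qed.

Lemma Pint0 p : (Pint p)`_0 = 0.
Proof. by rewrite coef_poly; case: ltnP. Qed.

Lemma deriv_inj F G : F^`() = G^`() -> F`_0 = G`_0 -> F = G.
Proof.
move=> H H0; apply/polyP => -[|i] //.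
have := congr1 (fun p => p`_i) H; rewrite !coef_deriv => /eqP.
by rewrite -subr_eq0 -mulrnBl mulrn_eq0 /= subr_eq0 => /eqP.
Qed.

Definition I p := (Pint p).[1] - (Pint p).[-1].

Lemma I_deriv p : I p^`() = p.[1] - p.[-1].
Proof.
rewrite /I.
have -> : Pint p^`() = p - (p`_0)%:P.
  apply: deriv_inj; first by rewrite PintK derivB derivC subr0.
  by rewrite Pint0 coefB coefC /= subrr.
rewrite !hornerE; ring.
Qed.

Lemma ID p q : I (p + q) = I p + I q.
Proof.
rewrite /I.
have -> : Pint (p + q) = Pint p + Pint q.
  by apply: deriv_inj; [rewrite derivD !PintK | rewrite coefD !Pint0 addr0].
rewrite !hornerD; ring.
Qed.

Lemma IZ k p : I (k *: p) = k * I p.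
Proof.
rewrite /I.
have -> : Pint (k *: p) = k *: Pint p.
  by apply: deriv_inj; [rewrite derivZ !PintK | rewrite coefZ !Pint0 mulr0].
rewrite !hornerZ; ring.
Qed.

Lemma IN p : I (- p) = - I p.
Proof. by rewrite -scaleN1r IZ mulN1r. Qed.

Lemma IB p q : I (p - q) = I p - I q.
Proof. by rewrite ID IN. Qed.

Lemma I_parts p q :
  I (p^`() * q) = (p * q).[1] - (p * q).[-1] - I (p * q^`()).
Proof.
have := I_deriv (p * q); rewrite derivM ID => <-; ring.
Qed.

Lemma dvdp_deriv_XsubC (a : R) m p :
  ('X - a%:P) ^+ m.+1 %| p -> ('X - a%:P) ^+ m %| p^`().
Proof.
case/dvdpP => g ->; rewrite derivM deriv_exp derivXsubC mul1r /=.
apply: dvdp_add.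
  by rewrite exprS mulrA dvdp_mull.
by rewrite -mulr_natr mulrA dvdp_mulr // dvdp_mull.
Qed.

Lemma dvdp_derivn_XsubC (a : R) n p k : (k <= n)%N ->
  ('X - a%:P) ^+ n %| p -> ('X - a%:P) ^+ (n - k) %| p^`(k).
Proof.
move=> + H; elim: k => [|k IH] hk; first by rewrite subn0.
rewrite derivnS; apply: dvdp_deriv_XsubC.
by rewrite -subSn // subSS IH // ltnW.
Qed.

End Poly.
Section Legendre.
Variable R : realType.
Variable n : nat.

Definition W : {poly R} := ('X ^+ 2 - 1) ^+ n.

Lemma W_fact : W = ('X - 1%:P) ^+ n * ('X - (-1)%:P) ^+ n.
Proof.
by rewrite /W -exprMn polyCN opprK polyC1 -subr_sqr expr1n.
Qed.

Lemma W_root k a : (k < n)%N -> (a = 1 \/ a = -1) -> root (W^`(k)) a.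
Proof.
move=> kn ha.
have H : ('X - a%:P) ^+ n %| W.
  rewrite W_fact; case: ha => ->; [exact: dvdp_mulr | exact: dvdp_mull].
have := dvdp_derivn_XsubC (ltnW kn) H.
rewrite -dvdp_XsubCl; apply: dvdp_trans.
by rewrite -[X in X %| _]expr1 dvdp_exp2l // subn_gt0.
Qed.

Lemma orth_gen (q : {poly R}) k : (k <= n)%N ->
  I (W^`(n) * q) = (-1) ^+ k * I (W^`(n - k) * q^`(k)).
Proof.
elim: k => [|k IH] hk; first by rewrite subn0 expr0 mul1r.
rewrite IH ?(ltnW hk) // -(subnSK hk) derivnS I_parts.
have kn : (n - k.+1 < n)%N by rewrite ltn_subrL; case: n hk.
have r1 := rootP (W_root kn (or_introl (erefl (1:R)))).
have r2 := rootP (W_root kn (or_intror (erefl (-1:R)))).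
rewrite !hornerM r1 r2.
rewrite -derivnS !mul0r subrr sub0r exprS; ring.
Qed.

Lemma I0 : I (0 : {poly R}) = 0.
Proof. by rewrite -(scale0r (0 : {poly R})) IZ mul0r. Qed.

Lemma orth (q : {poly R}) : (size q <= n)%N -> I (W^`(n) * q) = 0.
Proof.
move=> hq; rewrite (orth_gen q (leqnn n)) subnn (derivn_poly0 hq) mulr0.
by rewrite I0 mulr0.
Qed.

Lemma poly_rolle (p : {poly R}) a b : a < b -> p.[a] = 0 -> p.[b] = 0 ->
  exists2 c, a < c < b & (p^`()).[c] = 0.
Proof.
move=> ab pa pb.
have [c cab H] : exists2 c, c \in `]a, b[ & is_derive c 1 (horner p) 0.
  apply: (Rolle ab).
  - by move=> x xab; exact: derivable_horner.
  - by apply/continuous_subspaceT => x; exact: continuous_horner.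
  - by rewrite pa pb.
exists c; first by move: cab; rewrite in_itv.
have h1 := @derive_val _ _ _ _ _ _ _ H.
have h2 := @derive_val _ _ _ _ _ _ _ (is_derive_poly p c).
by rewrite -h2 h1.
Qed.

Lemma chain_incr (g : nat -> R) k : (forall i, (i.+1 < k)%N -> g i < g i.+1) ->
  forall i j, (i < j)%N -> (j < k)%N -> g i < g j.
Proof.
move=> H i; elim => [|j IH] //= ij jk.
rewrite ltnS leq_eqVlt in ij; case/orP: ij => [/eqP -> | ij]; first exact: H.
apply: lt_trans (IH ij (ltnW jk)) (H _ jk).
Qed.

Lemma chain k : (k <= n)%N -> exists g : nat -> R,
  (forall i, (i < k)%N -> -1 < g i < 1 /\ root (W^`(k)) (g i)) /\
  (forall i, (i.+1 < k)%N -> g i < g i.+1).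
Proof.
elim: k => [|k IH] hk.
  by exists (fun _ => 0); split => i.
have [g [g1 g2]] := IH (ltnW hk).
pose h i := match i with 0%N => -1 | j.+1 => if (j < k)%N then g j else 1 end.
have hb : forall i, -1 <= h i <= 1.
  case => [|j] /=; first by rewrite lexx /=; lra.
  case: ltnP => jk; last by lra.
  by have [/andP[? ?] _] := g1 _ jk; apply/andP; split; apply: ltW.
have hr : forall i, (i <= k.+1)%N -> root (W^`(k)) (h i).
  case => [|j] /= hj; first by apply: W_root => //; right.
  case: ltnP => jk; first by case: (g1 _ jk).
  by apply: W_root => //; left.
have hl : forall i, (i <= k)%N -> h i < h i.+1.
  case => [|j] /= hj.
    case: ltnP => k0; first by case: (g1 _ k0) => /andP[].
    lra.
  rewrite hj; case: ltnP => jk.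
    exact: g2.
  by case: (g1 _ hj) => /andP[].
have ex : forall i, exists c, (i <= k)%N -> h i < c < h i.+1 /\ root (W^`(k.+1)) c.
  move=> i; case: (leqP i k) => ik; last by exists 0.
  have [c /andP[c1 c2] c3] := poly_rolle (hl _ ik) (rootP (hr i (leqW ik)))
     (rootP (hr i.+1 ik)).
  by exists c => _; rewrite c1 c2; split => //; rewrite derivnS; apply/rootP.
have [g' Hg'] := choice ex.
exists g'; split.
  move=> i ik; have [/andP[c1 c2] c3] := Hg' i ik; split => //.
  have := hb i; have := hb i.+1; move=> /andP[? ?] /andP[? ?].
  apply/andP; split; lra.
move=> i ik.
have [/andP[c1 c2] _] := Hg' i (ltnW ik).
have [/andP[c3 c4] _] := Hg' i.+1 ik.
lra.
Qed.

End Legendre.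
Section LegRoots.
Variable R : realType.
Variable n : nat.

Lemma W_monic : W R n \is monic.
Proof. by rewrite /W -polyC1 monic_exp // monicXnsubC. Qed.

Lemma W_size : size (W R n) = (n + n).+1.
Proof.
have h := size_exp ('X ^+ 2 - 1 : {poly R}) n.
rewrite -polyC1 size_XnsubC // in h.
have : size (W R n) != 0%N by rewrite size_poly_eq0 monic_neq0 // W_monic.
rewrite /W -polyC1; move: h; case: (size _) => //= m -> _; lia.
Qed.

Lemma Wn_coef : (W R n)^`(n)`_n != 0.
Proof.
rewrite coef_derivn.
have -> : (W R n)`_(n + n) = 1.
  by have := W_monic; rewrite monicE lead_coefE W_size => /eqP.
by rewrite pnatr_eq0 -lt0n ffact_gt0 leq_addr.
Qed.

Lemma Wn_size : (size ((W R n)^`(n)) <= n.+1)%N.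
Proof.
apply/leq_sizeP => j hj; rewrite coef_derivn nth_default ?mul0rn // W_size.
lia.
Qed.

Lemma Wn_split : exists (c0 : R) (G : seq R), [/\ c0 != 0, uniq G, size G = n &
  (W R n)^`(n) = c0 *: \prod_(z <- G) ('X - z%:P)].
Proof.
have [g [g1 g2]] := chain R (leqnn n).
pose G := map g (iota 0 n).
have uG : uniq G.
  rewrite map_inj_in_uniq ?iota_uniq // => i j; rewrite !mem_iota !add0n.
  move=> /andP[_ hi] /andP[_ hj] e.
  case: (ltngtP i j) => // h.
    by have := chain_incr g2 h hj; rewrite e ltxx.
  by have := chain_incr g2 h hi; rewrite e ltxx.
have aG : all (root ((W R n)^`(n))) G.
  apply/allP => x /mapP [i]; rewrite mem_iota => /andP[_ hi] ->.
  exact: (g1 i hi).2.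
have uG' : uniq_roots G by rewrite uniq_rootsE.
have [q Hq] := uniq_roots_prod_XsubC aG uG'.
have P0 : (W R n)^`(n) != 0.
  by apply: contra Wn_coef => /eqP ->; rewrite coef0.
have q0 : q != 0 by apply: contra P0; rewrite Hq => /eqP ->; rewrite mul0r.
have pn0 : \prod_(z <- G) ('X - z%:P) != 0 by rewrite monic_neq0 // monic_prod_XsubC.
have hs := Wn_size; rewrite Hq (size_mul q0 pn0) in hs.
rewrite size_prod_XsubC size_map size_iota in hs.
have sq : (size q <= 1)%N by move: hs; case: (size q) => //= m; lia.
exists q`_0, G; split => //.
  by apply/eqP => e; move/eqP: q0; apply; rewrite {1}(size1_polyC sq) e.
  by rewrite /G size_map size_iota.
by rewrite Hq {1}(size1_polyC sq) mul_polyC.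
Qed.

End LegRoots.
Lemma mem_enum_set (R : realType) (G : seq R) x :
  (x \in finmap.enum_fset (fset_set [set` G])) = (x \in G).
Proof.
have := in_fset_set (finite_seq G) x.
rewrite /= => ->.
by apply/idP/idP; rewrite inE.
Qed.

Section SProps.
Variable R : realType.
Variable n : nat.
Local Notation S := (legendre_roots R n).

Lemma S_props : [/\ uniq S, size S = n &
  exists c1, c1 != 0 /\ legendre R n = c1 *: \prod_(z <- S) ('X - z%:P)].
Proof.
have [c0 [G [c00 uG sG HW]]] := Wn_split R n.
set k := (2 ^+ n * (n`!)%:R : R)^-1.
have k0 : k != 0 by rewrite invr_eq0 mulf_neq0 // ?expf_neq0 // pnatr_eq0 -lt0n fact_gt0.
have Hl : legendre R n = (k * c0) *: \prod_(z <- G) ('X - z%:P).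
  by rewrite -scalerA -HW.
have E : [set c : R | root (legendre R n) c] = [set` G].
  apply/funext => x /=; rewrite Hl rootZ ?mulf_neq0 // root_prod_XsubC.
  by [].
have mS : forall x, (x \in S) = (x \in G).
  by move=> x; rewrite /legendre_roots E mem_enum_set.
have pSG : perm_eq S G by apply: uniq_perm => //; exact: finmap.fset_uniq.
split.
- exact: finmap.fset_uniq.
- by rewrite (perm_size pSG).
- exists (k * c0); split; first by rewrite mulf_neq0.
  by rewrite Hl (perm_big _ pSG).
Qed.

End SProps.
Section Weights.
Variable R : realType.

Lemma ftc_poly (F : {poly R}) a b : a < b ->
  \int[lebesgue_measure]_(x in `[a, b]) (F^`()).[x] = F.[b] - F.[a].
Proof.
move=> ab.
rewrite /Rintegral (@continuous_FTC2 _ _ (horner F)) //.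
- by apply: continuous_subspaceT; exact: continuous_horner.
- split => [x _| |].
  + exact: derivable_horner.
  + by apply: cvg_at_right_filter; exact: continuous_horner.
  + by apply: cvg_at_left_filter; exact: continuous_horner.
- by move=> x _; rewrite -derivE.
Qed.

Lemma I_int (p : {poly R}) : I p = \int[lebesgue_measure]_(x in `[-1, 1]) p.[x].
Proof.
have := @ftc_poly (Pint p) (-1) 1 ltac:(lra).
by rewrite PintK => ->.
Qed.

Lemma I_sqr_ge0 (p : {poly R}) : 0 <= I (p * p).
Proof.
rewrite I_int; apply: Rintegral_ge0 => x _.
by rewrite hornerM -expr2 sqr_ge0.
Qed.

End Weights.
Section Lagrange.
Variable R : realType.

Definition Lc (S : seq R) (c : R) : {poly R} :=
  (\prod_(d <- S | d != c) (c - d)^-1) *: \prod_(d <- S | d != c) ('X - d%:P).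

Lemma Lc_horner S c x :
  (Lc S c).[x] = \prod_(d <- S | d != c) ((c - d)^-1 * (x - d)).
Proof.
rewrite hornerZ horner_prod big_split /=; congr (_ * _).
by apply: eq_bigr => d _; rewrite hornerXsubC.
Qed.

Lemma Lc_c S c : (Lc S c).[c] = 1.
Proof.
rewrite Lc_horner; apply: big1 => d dc; rewrite mulVf // subr_eq0 eq_sym //.
Qed.

Lemma Lc_d S c d : uniq S -> d \in S -> d != c -> (Lc S c).[d] = 0.
Proof.
move=> uS dS dc; rewrite Lc_horner big_mkcond (bigD1_seq d) //= dc subrr mulr0 mul0r //.
Qed.

Lemma size_Lc S c : uniq S -> c \in S -> (size (Lc S c) <= size S)%N.
Proof.
move=> uS cS; apply: leq_trans (size_scale_leq _ _) _.
rewrite -big_filter size_prod_XsubC.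
have -> : [seq d <- S | d != c] = rem c S by rewrite rem_filter.
by rewrite size_rem //; case: (S) cS.
Qed.

End Lagrange.
Lemma weight_ge0 (R : realType) (n : nat) (c : R) :
  c \in legendre_roots R n -> 0 <= I (Lc (legendre_roots R n) c).
Proof.
set S := legendre_roots R n => cS.
have [uS sS [c1 [c10 Hl]]] := S_props R n.
set L := Lc S c.
set om := \prod_(z <- S) ('X - z%:P).
have rts : all (root (L * (1 - L))) S.
  apply/allP => d dS; rewrite rootM; apply/orP.
  case: (eqVneq d c) => [->|dc].
    by right; rewrite /root hornerD hornerN hornerC /L Lc_c subrr.
  by left; rewrite /root /L Lc_d.
have uS' : uniq_roots S by rewrite uniq_rootsE.
have [Q HQ] := uniq_roots_prod_XsubC rts uS'.
have sL : (size L <= n)%N by rewrite -sS; apply: size_Lc.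
have n0 : (0 < n)%N by rewrite -sS -has_predT; apply/hasP; exists c.
have s1L : (size (1 - L)%R <= n)%N.
  have := size_polyD 1 (- L); rewrite size_polyN size_poly1 => h.
  apply: leq_trans h _; rewrite geq_max sL n0 //.
have sQ : (size Q <= n)%N.
  have h := size_polyMleq L (1 - L).
  rewrite HQ in h.
  have [->|Q0] := eqVneq Q 0; first by rewrite size_poly0.
  have om0 : om != 0 by rewrite monic_neq0 // monic_prod_XsubC.
  rewrite size_mul // size_prod_XsubC sS in h.
  move: h; rewrite addnS /= -subn1 => h.
  move: h sL s1L n0; clear; move: (size Q) (size L) (size (1 - L)%R) => a b d; lia.
have key : I (om * Q) = 0.
  have -> : om = c1^-1 *: legendre R n by rewrite Hl scalerA mulVf // scale1r.
  rewrite /legendre !scalerA -scalerAl IZ.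
  by rewrite orth // mulr0.
have : I L - I (L * L) = 0.
  by rewrite -IB -{1}(mulr1 L) -mulrBr HQ mulrC key.
move/eqP; rewrite subr_eq0 => /eqP ->.
exact: I_sqr_ge0.
Qed.
Lemma weight_eq (R : realType) n (a b c : R) : a < b -> c \in legendre_roots R n ->
  gl_weight n a b (((b - a) * c + (a + b)) / 2) =
  (b - a) / 2 * I (Lc (legendre_roots R n) c).
Proof.
move=> ab cS.
set S := legendre_roots R n.
have ba0 : b - a != 0 by rewrite subr_eq0 gt_eqF.
have hx : (2 * (((b - a) * c + (a + b)) / 2) - (a + b)) / (b - a) = c.
  by field.
rewrite /gl_weight /= hx ab cS /=.
set q : {poly R} := (2 / (b - a)) *: 'X - ((a + b) / (b - a))%:P.
set G : {poly R} := ((b - a) / 2) *: (Pint (Lc S c) \Po q).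
have qE : forall y, q.[y] = (2 * y - (a + b)) / (b - a).
  by move=> y; rewrite /q !hornerE; field.
have E : (fun y => \prod_(c0 <- S | c0 != c)
       ((2 * y - (b - a) * c0 - (a + b)) /
        (2 * (((b - a) * c + (a + b)) / 2) - (b - a) * c0 - (a + b))))
   = (fun y => (G^`()).[y]).
  apply/funext => y.
  rewrite /G derivZ deriv_comp PintK hornerZ hornerM horner_comp Lc_horner.
  have -> : q^`() = (2 / (b - a))%:P.
    by rewrite /q derivB derivZ derivX derivC subr0 alg_polyC.
  rewrite hornerC qE.
  rewrite [RHS]mulrCA.
  have -> : (b - a) / 2 * (2 / (b - a)) = 1 by field.
  rewrite mulr1; apply: eq_bigr => d dc.
  have cd : c - d != 0 by rewrite subr_eq0 eq_sym.
  have -> : 2 * (((b - a) * c + (a + b)) / 2) - (b - a) * d - (a + b) = (b - a) * (c - d) by field.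
  by field; rewrite ba0 cd.
rewrite E ftc_poly // /G !hornerZ !horner_comp !qE.
have -> : (2 * b - (a + b)) / (b - a) = 1 by field.
have -> : (2 * a - (a + b)) / (b - a) = -1 by field.
rewrite /I; ring.
Qed.
Definition node (R : realType) (a b c : R) := ((b - a) * c + (a + b)) / 2.

Lemma node_itv (R : realType) (a b x : R) : a < b ->
  (a <= node a b x <= b) = (-1 <= x <= 1).
Proof.
move=> ab; rewrite /node.
apply/idP/idP => /andP[h1 h2]; apply/andP; split; nra.
Qed.

Lemma node_inj (R : realType) (a b : R) : a < b -> injective (node a b).
Proof.
move=> ab x y; rewrite /node => e.
have ba0 : b - a != 0 by rewrite subr_eq0 gt_eqF.
have : (b - a) * x = (b - a) * y.
  have := congr1 (fun z => 2 * z - (a + b)) e => /=.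
  have h2 : (2 : R) != 0 by [].
  by rewrite !(mulrC 2) !divfK // !addrK.
by move/mulfI; apply.
Qed.

Lemma mem_citv (R : realType) (a b r : R) : (r \in `[a, b]%classic) = (a <= r <= b).
Proof.

apply/idP/idP => h.
  by move/set_mem: h; rewrite /= in_itv.
by apply/mem_set; rewrite /= in_itv.
Qed.
Lemma my_perm (R : realType) (s1 s2 : seq R) (F : R -> \bar R) : perm_eq s1 s2 ->
  \big[adde/0%E]_(r <- s1) F r = \big[adde/0%E]_(r <- s2) F r.
Proof. by move=> pe; exact: (@perm_big _ +%R 0%R _ s1 s2 xpredT F pe). Qed.

Lemma gl_sum_eq (R : realType) n (a b : R) (psi : R -> \bar R) : a < b ->
  gl_sum n a b psi =
  (\sum_(c <- legendre_roots R n | ((-1 <= c <= 1) && (I (Lc (legendre_roots R n) c) != 0))%R)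
     (((b - a) / 2 * I (Lc (legendre_roots R n) c))%R%:E * psi (node a b c)))%E.
Proof.
move=> ab.
set S := legendre_roots R n.
set Pc := fun c => (-1 <= c <= 1) && (I (Lc S c) != 0).
have ba0 : b - a != 0 by rewrite subr_eq0 gt_eqF.
have uS : uniq S by case: (S_props R n).
set L := map (node a b) [seq x <- S | Pc x].
have uL : uniq L by rewrite map_inj_uniq ?filter_uniq //; exact: node_inj.
have key : [set r : R | r \in `[a, b]%classic /\ gl_weight n a b r != 0] = [set` L].
  apply/funext => r /=; apply/propext; split.
  - rewrite mem_citv => -[rab].
    rewrite /gl_weight /=.
    set x := (2 * r - (a + b)) / (b - a).
    case: ifP; last by move=> _; rewrite eqxx.
    rewrite ab /= => xS w0.
    have rE : r = node a b x by rewrite /node /x; field.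
    apply/mapP; exists x => //; rewrite mem_filter xS andbT /Pc.
    rewrite -(node_itv x ab) -rE rab /=.
    apply: contra w0 => /eqP I0.
    have := weight_eq ab xS; rewrite -/S I0 mulr0.
    rewrite -[X in gl_weight _ _ _ X]/(node a b x) -rE.
    by rewrite /gl_weight /= -/x ab xS /= => ->.
  - rewrite /L => /mapP [x]; rewrite mem_filter => /andP[/andP[x11 Ix] xS] ->.
    split; first by rewrite mem_citv node_itv.
    by rewrite /node weight_eq // mulf_neq0 // mulf_neq0 // invr_eq0.
rewrite /gl_sum key.
have pe : perm_eq (finmap.enum_fset (fset_set [set` L])) L.
  apply: uniq_perm; [exact: finmap.fset_uniq | exact: uL | move=> x; by rewrite mem_enum_set].
rewrite (my_perm _ pe) big_map big_filter big_seq_cond [in RHS]big_seq_cond.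
apply: eq_bigr => c /andP[cS _].
by rewrite /node weight_eq.
Qed.
Unset Implicit Arguments.

Theorem lemma3p1 (R : realType) (T : R) (n : nat) (s t : R) (psi : R -> \bar R)
  (hT : 0 < T) (hs : 0 <= s) (hsT : s < T) (ht : 0 <= t) (hts : t <= s)
  (hpsi0 : forall r, 0 <= r <= T -> (0 <= psi r)%E)
  (hpsi : forall r1 r2, 0 <= r1 -> r1 <= r2 -> r2 <= T -> (psi r2 <= psi r1)%E) :
  (gl_sum n s T psi <= gl_sum n t T psi)%E.
Proof.
have htT : t < T by apply: le_lt_trans hsT.
rewrite (gl_sum_eq n psi hsT) (gl_sum_eq n psi htT).
rewrite big_seq_cond [X in (_ <= X)%E]big_seq_cond.
apply: lee_sum => c /andP[cS /andP[/andP[c1 c2] _]].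
have w0 := weight_ge0 cS.
rewrite /node.
apply: lee_pmul.
- by rewrite lee_fin; apply: mulr_ge0 => //; apply: divr_ge0; lra.
- by apply: hpsi0; apply/andP; split; nra.
- by rewrite lee_fin; apply: ler_wpM2r => //; lra.
- by apply: hpsi; nra.
Qed.
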